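(* Let $P,Q,N>0$, let $\rho=P/N$, and let $A$ be a nonnegative random variable with a probability density function on $[0,\infty)$. For real $\alpha$ define the random variable $$J(\alpha,A)=\log\frac{P\left[A(P+Q)+N\right]}{(1-\alpha)^2APQ+(P+\alpha^2Q)N}.$$ Then for every $R\ge 0$, $$\min_{\alpha\in\mathbb{R}}\Pr\left[J(\alpha,A)\le R\right]=\Pr\left[A\le \frac{e^{R}-1}{\rho}\right],$$ and the minimum is attained at $\alpha^\ast=1-e^{-R}$. In particular this minimum equals the outage probability $\Pr[\log(1+A\rho)\le R]$ obtained when the decoder also knows the interference.
   Context: Interpretation: quasi-static channel $Y_i=\sqrt{A}(X_i+S_i)+Z_i$, $i=1,\dots,n$, with $Z_i$ i.i.d. $\mathcal{CN}(0,N)$, interference $S_i$ i.i.d. $\mathcal{CN}(0,Q)$ known noncausally to the encoder only, input average power constraint $P$, and a single fading coefficient $A$ (constant over the block, independent of $S$) known to the decoder but not the encoder. $J(\alpha,A)$ is the rate achieved, conditional on $A$, by dirty paper coding with $X\sim\mathcal{CN}(0,P)$ independent of $S$ and auxiliary variable $U=X+\alpha S$. Logarithms are natural. *)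

(* Defs.v *)
From mathcomp Require Import all_boot all_order all_algebra.
From mathcomp Require Import all_classical all_reals all_analysis.
Set Implicit Arguments. Unset Strict Implicit. Unset Printing Implicit Defensive.
Import Order.TTheory GRing.Theory Num.Theory.
Local Open Scope ring_scope.

Definition Jrate {R : realType} (P Q N alpha a : R) : R :=
  ln ((P * (a * (P + Q) + N)) /
      ((1 - alpha) ^+ 2 * a * P * Q + (P + alpha ^+ 2 * Q) * N)).

(* Main.v *)
Require Import Defs.
From mathcomp Require Import all_boot all_order all_algebra.
From mathcomp Require Import all_classical all_reals all_analysis.
From mathcomp Require Import lra ring.
Import Order.TTheory GRing.Theory Num.Theory.
Local Open Scope classical_set_scope.
Local Open Scope ring_scope.

Lemma ln_le_iff (R : realType) (x r : R) : 0 < x -> (ln x <= r) = (x <= expR r).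
Proof.
move=> x0; rewrite -{1}(expRK r) ler_ln // posrE; exact: expR_gt0.
Qed.

Lemma Jle (R : realType) (P Q N al a r : R) : 0 < P -> 0 < Q -> 0 < N -> 0 <= a ->
  (Jrate P Q N al a <= r) =
  (P * (a * (P + Q) + N) <= expR r * ((1 - al) ^+ 2 * a * P * Q + (P + al ^+ 2 * Q) * N)).
Proof.
move=> hP hQ hN ha.
have hD : 0 < (1 - al) ^+ 2 * a * P * Q + (P + al ^+ 2 * Q) * N.
  have h1 : 0 <= (1 - al) ^+ 2 * a * P * Q.
    have hs := sqr_ge0 (1 - al); move: hs; set s := (1 - al) ^+ 2 => hs.
    by rewrite mulr_ge0 ?(ltW hQ) // mulr_ge0 ?(ltW hP) // mulr_ge0.
  have h2 : 0 < (P + al ^+ 2 * Q) * N.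
    by rewrite mulr_gt0 // ltr_wpDr // mulr_ge0 ?sqr_ge0 // ltW.
  by rewrite (le_lt_trans h1) // ltrDl.
have hn : 0 < P * (a * (P + Q) + N).
  by rewrite mulr_gt0 // ltr_wpDl // mulr_ge0 // ltW // addr_gt0.
rewrite /Jrate ln_le_iff ?divr_gt0 // ler_pdivrMr //.
Qed.

Lemma costa (R : realType) (P Q N al a : R) : 0 < P -> 0 < Q -> 0 < N -> 0 <= a ->
  P * N * (a * (P + Q) + N) <= (N + a * P) * ((1 - al) ^+ 2 * a * P * Q + (P + al ^+ 2 * Q) * N).
Proof.
move=> hP hQ hN ha.
have h : 0 <= Q * ((1 - al) * a * P - al * N) ^+ 2 by rewrite mulr_ge0 ?sqr_ge0 // ltW.
rewrite -subr_ge0; apply: (le_trans h); rewrite le_eqVlt; apply/orP; left; apply/eqP; ring.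
Qed.

Lemma astar (R : realType) (P Q N a e : R) : 0 < P -> 0 < Q -> 0 < N -> 1 <= e ->
 (P*(a*(P+Q)+N) <= e*((1-(1-e^-1))^+2*a*P*Q + (P+(1-e^-1)^+2*Q)*N)) = (a*P <= (e-1)*N).
Proof.
move=> hP hQ hN he.
have e0 : e != 0 by rewrite gt_eqF // (lt_le_trans ltr01).
have hid : e*((1-(1-e^-1))^+2*a*P*Q + (P+(1-e^-1)^+2*Q)*N) - P*(a*(P+Q)+N)
   = ((e-1)*N - a*P)*(P+(1-e^-1)*Q) by field.
have hb : e^-1 <= 1 by rewrite invf_le1 // (lt_le_trans ltr01).
have pos : 0 < P+(1-e^-1)*Q by rewrite ltr_wpDr // mulr_ge0 ?subr_ge0 // ltW.
by rewrite -subr_ge0 hid pmulr_lge0 // subr_ge0.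
Qed.

Lemma part1 (R : realType) (P Q N al a e : R) : 0 < P -> 0 < Q -> 0 < N -> 0 <= a ->
  a * P <= (e - 1) * N ->
  P * (a * (P + Q) + N) <= e * ((1 - al) ^+ 2 * a * P * Q + (P + al ^+ 2 * Q) * N).
Proof.
move=> hP hQ hN ha h.
have h1 := @costa _ P Q N al a hP hQ hN ha.
set D := (1 - al) ^+ 2 * a * P * Q + (P + al ^+ 2 * Q) * N in h1 *.
set X := a * (P + Q) + N in h1 *.
have hD : 0 <= D.
  have hs := sqr_ge0 (1 - al); have hs2 := sqr_ge0 al.
  rewrite /D; apply: addr_ge0.
    move: hs; set s := (1 - al) ^+ 2 => hs.
    by rewrite mulr_ge0 ?(ltW hQ) // mulr_ge0 ?(ltW hP) // mulr_ge0.
  by rewrite mulr_ge0 ?(ltW hN) // addr_ge0 ?(ltW hP) // mulr_ge0 // ltW.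
have h2 : (N + a * P) * D <= e * N * D by rewrite ler_wpM2r //; lra.
have h3 : N * (P * X) <= N * (e * D).
  have := le_trans h1 h2; clearbody D X; nra.
by rewrite -(ler_pM2l hN).
Qed.

Lemma maff d (T : measurableType d) (R : realType) (A : T -> R) (c1 c0 : R) :
  measurable_fun setT A -> measurable_fun setT (fun w => c1 * A w + c0).
Proof.
move=> mA; apply: measurable_realfun.measurable_funD; last exact: measurable_cst.
by apply: measurable_realfun.measurable_funM => //; exact: measurable_cst.
Qed.

Lemma mle d (T : measurableType d) (R : realType) (A : T -> R) (a b c e : R) :
  measurable_fun setT A -> measurable [set w | a * A w + b <= c * A w + e].
Proof.
move=> mA; rewrite -(setTI [set w | _]); apply: measurable_fun_le => //; exact: maff.
Qed.

Theorem mainTheorem2 (d : measure_display) (T : measurableType d)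
  (R : realType) (Pr : probability T R) (A : T -> R)
  (P Q N : R) (hP : 0 < P) (hQ : 0 < Q) (hN : 0 < N)
  (mA : measurable_fun setT A) (A_ge0 : forall w, 0 <= A w)
  (f : R -> R) (mf : measurable_fun setT f) (f_ge0 : forall x, 0 <= f x)
  (f_supp : forall x, x < 0 -> f x = 0)
  (f_density : forall B : set R, measurable B ->
     Pr (A @^-1` B) = (\int[lebesgue_measure]_(x in B) (f x)%:E)%E) :
  forall r : R, 0 <= r ->
    let rho := P / N in
    let target := Pr [set w | (A w <= (expR r - 1) / rho)%R] in
    (forall alpha : R,
       (target <= Pr [set w | (Jrate P Q N alpha (A w) <= r)%R])%E) /\
    Pr [set w | (Jrate P Q N (1 - expR (- r)) (A w) <= r)%R] = target /\
    target = Pr [set w | (ln (1 + A w * rho) <= r)%R].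
Proof.
move=> r r0 rho target.
have e1 : 1 <= expR r by have := expR_ge1Dx r; lra.
have e0 : 0 < expR r by exact: expR_gt0.
have rho0 : 0 < rho by rewrite divr_gt0.
have hrho : rho * N = P by rewrite /rho divfK // gt_eqF.
have KA : forall a, (a <= (expR r - 1) / rho) = (a * P <= (expR r - 1) * N).
  move=> a; rewrite ler_pdivlMr // -(ler_pM2r hN (a * rho)) -mulrA hrho //.
have SJ : forall al, [set w | Jrate P Q N al (A w) <= r] =
   [set w | (P * (P + Q)) * A w + P * N <=
      (expR r * ((1 - al) ^+ 2 * P * Q)) * A w + expR r * ((P + al ^+ 2 * Q) * N)].
  move=> al; apply/seteqP; split=> w /=; rewrite Jle //.
    move=> h; apply: (le_trans _ (le_trans h _)); rewrite le_eqVlt; apply/orP; left; apply/eqP; ring.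
  move=> h; apply: (le_trans _ (le_trans h _)); rewrite le_eqVlt; apply/orP; left; apply/eqP; ring.
have mT : measurable [set w | A w <= (expR r - 1) / rho].
  have := @mle d T R A 1 0 0 ((expR r - 1) / rho) mA.
  by congr measurable; apply/seteqP; split=> w /=; rewrite mul1r mul0r !add0r addr0.
have eqT : Pr [set w | (Jrate P Q N (1 - expR (- r)) (A w) <= r)%R] = target.
  rewrite /target; congr (Pr _); apply/seteqP; split=> w /=; rewrite Jle // KA expRN astar //.
split.
  move=> al; rewrite /target; apply: le_measure; rewrite ?inE //.
    by rewrite SJ; exact: mle.
  move=> w /=; rewrite KA Jle // => h.
  exact: part1.
split; first exact: eqT.
rewrite /target; congr (Pr _); apply/seteqP; split=> w /=;
  rewrite ln_le_iff ?ler_pdivlMr //; try lra.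
all: have := mulr_ge0 (A_ge0 w) (ltW rho0); lra.
Qed.
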